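(* Let $f$ be a $C^1$ diffeomorphism of $M=\mathbb{R}^d/\mathbb{Z}^d$ and $x\in M$. If $\Gamma_{o(x)}$ is a bijection of $\mathcal{N}$, then $x$ is u-hyperbolic.
   Context: Tangent spaces identified with $\mathbb{R}^d$. $o(x)=(f^k(x))_{k\in\mathbb{Z}}$, $(\Gamma_{\mathbf{x}}\eta)_k=\eta_k-Df(x_{k-1})\eta_{k-1}$. $\mathcal{N}$ is the space of sequences $(\eta_k)_{k\in\mathbb{Z}}$ in $\mathbb{R}^d$ with $\limsup_{|k|\to\infty}\frac1{|k|}\log|\eta_k|\le0$. A point $x$ is u-hyperbolic if there exist subspaces $E^u(x),E^s(x)$ spanning $T_xM$ such that $\limsup_{k\to\infty}\frac1k\log|Df^{-k}(x)\eta^s|>0$ for all nonzero $\eta^s\in E^s(x)$ and $\limsup_{k\to\infty}\frac1k\log|Df^k(x)\eta^u|>0$ for all nonzero $\eta^u\in E^u(x)$. *)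

(* Defs.v *)
From Stdlib Require Import Reals ZArith.
Open Scope R_scope.

(* Vectors of R^d are represented as nat -> R; only coordinates i < d matter.
   Matrices are nat -> nat -> R; only entries (i,j) with i,j < d matter. *)
Definition vec := nat -> R.
Definition mat := nat -> nat -> R.

Fixpoint vsum (n : nat) (f : nat -> R) : R :=
  match n with O => 0 | S m => vsum m f + f m end.

(* sup-norm on R^d (all norms on R^d are equivalent; exponents are norm-independent) *)
Fixpoint vnorm (n : nat) (v : vec) : R :=
  match n with O => 0 | S m => Rmax (vnorm m v) (Rabs (v m)) end.

Definition vadd (u v : vec) : vec := fun i => u i + v i.
Definition vsub (u v : vec) : vec := fun i => u i - v i.
Definition vscale (a : R) (v : vec) : vec := fun i => a * v i.
Definition vzero : vec := fun _ => 0.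

Definition mapp (d : nat) (A : mat) (v : vec) : vec :=
  fun i => vsum d (fun j => A i j * v j).

Definition veq (d : nat) (u v : vec) : Prop := forall i, (i < d)%nat -> u i = v i.

Definition vnonzero (d : nat) (v : vec) : Prop := exists i, (i < d)%nat /\ v i <> 0.

(* x and y represent the same point of the torus R^d / Z^d *)
Definition congZ (d : nat) (x y : vec) : Prop :=
  exists m : nat -> Z, forall i, (i < d)%nat -> x i = y i + IZR (m i).

Definition has_deriv (d : nat) (H : vec -> vec) (x : vec) (L : mat) : Prop :=
  forall eps, eps > 0 -> exists delta, delta > 0 /\
    forall h, vnorm d h < delta ->
      vnorm d (vsub (vsub (H (vadd x h)) (H x)) (mapp d L h)) <= eps * vnorm d h.

Definition is_C1 (d : nat) (H : vec -> vec) (DH : vec -> mat) : Prop :=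
  (forall x, has_deriv d H x (DH x)) /\
  (forall x eps, eps > 0 -> exists delta, delta > 0 /\
     forall y, vnorm d (vsub y x) < delta ->
       forall i j, (i < d)%nat -> (j < d)%nat -> Rabs (DH y i j - DH x i j) < eps).

(* H : R^d -> R^d is a lift of a well-defined self-map of M = R^d/Z^d *)
Definition torus_lift (d : nat) (H : vec -> vec) : Prop :=
  forall x y, congZ d x y -> congZ d (H x) (H y).

(* f (lifted by F, with derivative DF) is a C^1 diffeomorphism of M = R^d/Z^d,
   with inverse f^{-1} lifted by G (derivative DG). *)
Definition C1_diffeo_torus (d : nat) (F G : vec -> vec) (DF DG : vec -> mat) : Prop :=
  torus_lift d F /\ torus_lift d G /\
  is_C1 d F DF /\ is_C1 d G DG /\
  (forall x, congZ d (G (F x)) x) /\ (forall x, congZ d (F (G x)) x).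

Definition orb (F G : vec -> vec) (x : vec) (k : Z) : vec :=
  match k with
  | Z0 => x
  | Zpos p => Nat.iter (Pos.to_nat p) F x
  | Zneg p => Nat.iter (Pos.to_nat p) G x
  end.

(* Df^k(x) eta = Df(x_{k-1}) ... Df(x_0) eta   (chain rule), k >= 0 *)
Fixpoint Dfk (d : nat) (F G : vec -> vec) (DF : vec -> mat) (x : vec) (k : nat) (eta : vec) : vec :=
  match k with
  | O => eta
  | S n => mapp d (DF (orb F G x (Z.of_nat n))) (Dfk d F G DF x n eta)
  end.

(* Df^{-k}(x) eta = D(f^{-1})(x_{-(k-1)}) ... D(f^{-1})(x_0) eta, k >= 0 *)
Fixpoint Dfmk (d : nat) (F G : vec -> vec) (DG : vec -> mat) (x : vec) (k : nat) (eta : vec) : vec :=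
  match k with
  | O => eta
  | S n => mapp d (DG (orb F G x (- Z.of_nat n)%Z)) (Dfmk d F G DG x n eta)
  end.

(* limsup_{k -> oo} (1/k) log |v_k| > 0 *)
Definition pos_upper_exponent (d : nat) (v : nat -> vec) : Prop :=
  exists c, c > 0 /\ forall K : nat, exists k : nat, (K <= k)%nat /\ (0 < k)%nat /\
    vnorm d (v k) > exp (c * INR k).

Definition zseq := Z -> vec.

(* eta in N : limsup_{|k| -> oo} (1/|k|) log |eta_k| <= 0 *)
Definition inN (d : nat) (eta : zseq) : Prop :=
  forall eps, eps > 0 -> exists K : nat, forall k : Z,
    (Z.of_nat K <= Z.abs k)%Z -> vnorm d (eta k) <= exp (eps * IZR (Z.abs k)).

Definition zseq_eq (d : nat) (a b : zseq) : Prop := forall k, veq d (a k) (b k).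

Definition Gamma (d : nat) (F G : vec -> vec) (DF : vec -> mat) (x : vec) (eta : zseq) : zseq :=
  fun k => vsub (eta k) (mapp d (DF (orb F G x (k - 1)%Z)) (eta (k - 1)%Z)).

Definition Gamma_bijection_N (d : nat) (F G : vec -> vec) (DF : vec -> mat) (x : vec) : Prop :=
  (forall eta, inN d eta -> inN d (Gamma d F G DF x eta)) /\
  (forall zeta, inN d zeta -> exists eta, inN d eta /\ zseq_eq d (Gamma d F G DF x eta) zeta) /\
  (forall e1 e2, inN d e1 -> inN d e2 ->
     zseq_eq d (Gamma d F G DF x e1) (Gamma d F G DF x e2) -> zseq_eq d e1 e2).

Definition is_subspace (d : nat) (E : vec -> Prop) : Prop :=
  E vzero /\ (forall u v, E u -> E v -> E (vadd u v)) /\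
  (forall a u, E u -> E (vscale a u)) /\
  (forall u v, veq d u v -> E u -> E v).

Definition u_hyperbolic (d : nat) (F G : vec -> vec) (DF DG : vec -> mat) (x : vec) : Prop :=
  exists Eu Es : vec -> Prop,
    is_subspace d Eu /\ is_subspace d Es /\
    (forall v, exists u s, Eu u /\ Es s /\ veq d v (vadd u s)) /\
    (forall eta, Es eta -> vnonzero d eta ->
       pos_upper_exponent d (fun k => Dfmk d F G DG x k eta)) /\
    (forall eta, Eu eta -> vnonzero d eta ->
       pos_upper_exponent d (fun k => Dfk d F G DF x k eta)).

(* Main.v *)
Require Import Defs.
From Stdlib Require Import Reals ZArith Lra Lia Classical FunctionalExtensionality.
Open Scope R_scope.

Lemma vnorm_nonneg n v : 0 <= vnorm n v.
Proof. induction n; simpl. lra. eapply Rle_trans; [exact IHn|apply Rmax_l]. Qed.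

Lemma coord_le n v i : (i < n)%nat -> Rabs (v i) <= vnorm n v.
Proof.
  induction n; intros Hi. lia. simpl.
  destruct (Nat.eq_dec i n). subst; apply Rmax_r.
  eapply Rle_trans; [apply IHn; lia|apply Rmax_l].
Qed.

Lemma vnorm_le n v B : 0 <= B -> (forall i, (i < n)%nat -> Rabs (v i) <= B) -> vnorm n v <= B.
Proof.
  induction n; intros HB H; simpl. lra.
  apply Rmax_lub. apply IHn; auto. apply H; lia.
Qed.

Lemma vnorm_ext n u v : (forall i, (i < n)%nat -> u i = v i) -> vnorm n u = vnorm n v.
Proof.
  induction n; intros H; simpl; auto. rewrite IHn by (intros; apply H; lia).
  rewrite (H n) by lia. auto.
Qed.

Lemma vnorm_tri n w u v : (forall i, (i < n)%nat -> w i = u i + v i) ->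
  vnorm n w <= vnorm n u + vnorm n v.
Proof.
  intros H. apply vnorm_le. pose proof (vnorm_nonneg n u); pose proof (vnorm_nonneg n v); lra.
  intros i Hi. rewrite H by auto. eapply Rle_trans; [apply Rabs_triang|].
  pose proof (coord_le n u i Hi); pose proof (coord_le n v i Hi); lra.
Qed.

Lemma vnorm_scale n a v : vnorm n (vscale a v) = Rabs a * vnorm n v.
Proof.
  induction n; simpl. ring. rewrite IHn. unfold vscale. rewrite Rabs_mult.
  rewrite RmaxRmult; auto. apply Rabs_pos.
Qed.

Lemma vnorm_zero0 n v : vnorm n v <= 0 -> forall i, (i < n)%nat -> v i = 0.
Proof.
  intros H i Hi. pose proof (coord_le n v i Hi). pose proof (Rabs_pos (v i)).
  destruct (Req_dec (v i) 0); auto. pose proof (Rabs_pos_lt _ H2). lra.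
Qed.

Lemma vnorm_vzero n : vnorm n vzero = 0.
Proof. apply Rle_antisym. apply vnorm_le. lra. intros; unfold vzero; rewrite Rabs_R0; lra. apply vnorm_nonneg. Qed.

Lemma vsum_ext n f g : (forall j, (j < n)%nat -> f j = g j) -> vsum n f = vsum n g.
Proof. induction n; intros H; simpl; auto. rewrite IHn by (intros; apply H; lia). rewrite H by lia; auto. Qed.

Lemma vsum_add n f g : vsum n (fun j => f j + g j) = vsum n f + vsum n g.
Proof. induction n; simpl. ring. rewrite IHn; ring. Qed.

Lemma vsum_scal n a f : vsum n (fun j => a * f j) = a * vsum n f.
Proof. induction n; simpl. ring. rewrite IHn; ring. Qed.

Lemma vsum_abs n f : Rabs (vsum n f) <= vsum n (fun j => Rabs (f j)).
Proof. induction n; simpl. rewrite Rabs_R0; lra. eapply Rle_trans; [apply Rabs_triang|]. lra. Qed.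

Lemma vsum_le n f g : (forall j, (j < n)%nat -> f j <= g j) -> vsum n f <= vsum n g.
Proof. induction n; intros H; simpl. lra. pose proof (H n ltac:(lia)). pose proof (IHn ltac:(intros; apply H; lia)). lra. Qed.

Lemma vsum_nonneg n f : (forall j, (j < n)%nat -> 0 <= f j) -> 0 <= vsum n f.
Proof. induction n; intros H; simpl. lra. pose proof (H n ltac:(lia)). pose proof (IHn ltac:(intros; apply H; lia)). lra. Qed.

Lemma vsum_term n f i : (forall j, (j < n)%nat -> 0 <= f j) -> (i < n)%nat -> f i <= vsum n f.
Proof.
  induction n; intros H Hi. lia. simpl. destruct (Nat.eq_dec i n). subst.
  pose proof (vsum_nonneg n f ltac:(intros; apply H; lia)). lra.
  pose proof (IHn ltac:(intros; apply H; lia) ltac:(lia)). pose proof (H n ltac:(lia)). lra.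
Qed.

Lemma mapp_add d A u v i : mapp d A (vadd u v) i = mapp d A u i + mapp d A v i.
Proof. unfold mapp, vadd. rewrite <- vsum_add. apply vsum_ext; intros; ring. Qed.

Lemma mapp_scale d A a u i : mapp d A (vscale a u) i = a * mapp d A u i.
Proof. unfold mapp, vscale. rewrite <- vsum_scal. apply vsum_ext; intros; ring. Qed.

Lemma mapp_ext d A u v i : veq d u v -> mapp d A u i = mapp d A v i.
Proof. intros H. unfold mapp. apply vsum_ext; intros; rewrite H; auto. Qed.

Lemma mapp_zero d A i : mapp d A vzero i = 0.
Proof. unfold mapp, vzero. induction d; simpl. auto. rewrite IHd; ring. Qed.

Definition Cm (d : nat) (A : mat) : R := vsum d (fun i => vsum d (fun j => Rabs (A i j))).

Lemma Cm_nonneg d A : 0 <= Cm d A.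
Proof. apply vsum_nonneg; intros; apply vsum_nonneg; intros; apply Rabs_pos. Qed.

Lemma mapp_bound d A h : vnorm d (mapp d A h) <= Cm d A * vnorm d h.
Proof.
  apply vnorm_le. pose proof (Cm_nonneg d A); pose proof (vnorm_nonneg d h); nra.
  intros i Hi. unfold mapp. eapply Rle_trans; [apply vsum_abs|].
  apply Rle_trans with (vsum d (fun j => Rabs (A i j)) * vnorm d h).
  rewrite Rmult_comm, <- vsum_scal. apply vsum_le. intros j Hj. rewrite Rabs_mult.
  pose proof (coord_le d h j Hj). pose proof (Rabs_pos (A i j)). nra.
  apply Rmult_le_compat_r. apply vnorm_nonneg.
  unfold Cm. apply (vsum_term d (fun i => vsum d (fun j => Rabs (A i j)))); auto.
  intros; apply vsum_nonneg; intros; apply Rabs_pos.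
Qed.

Definition tame (d : nat) (s : nat -> vec) : Prop :=
  forall eps, eps > 0 -> exists K C, forall n, (K <= n)%nat -> vnorm d (s n) <= C * exp (eps * INR n).

Lemma exp_le_mono a b : a <= b -> exp a <= exp b.
Proof. intros [H|H]. left; apply exp_increasing; auto. subst; lra. Qed.

Lemma tame_exp d s : tame d s -> forall eps, eps > 0 -> exists K, forall n, (K <= n)%nat ->
  vnorm d (s n) <= exp (eps * INR n).
Proof.
  intros H eps He. destruct (H (eps/2) ltac:(lra)) as [K [C HK]].
  destruct (INR_archimed (eps/2) (Rabs C) ltac:(lra)) as [N HN].
  exists (max K N). intros n Hn. eapply Rle_trans; [apply HK; lia|].
  assert (HnN : INR N <= INR n) by (apply le_INR; lia).
  set (x := eps/2 * INR n).
  assert (Hx : Rabs C < x) by (unfold x; nra).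
  assert (Hx0 : x <> 0) by (pose proof (Rabs_pos C); lra).
  pose proof (exp_ineq1 x Hx0).
  replace (eps * INR n) with (x + x) by (unfold x; field).
  rewrite exp_plus. pose proof (exp_pos x). pose proof (Rle_abs C).
  apply Rmult_le_compat_r; lra.
Qed.

Lemma tame_eqv d s t : (forall n, veq d (s n) (t n)) -> tame d t -> tame d s.
Proof.
  intros H Ht eps He. destruct (Ht eps He) as [K [C HK]]. exists K, C. intros n Hn.
  rewrite (vnorm_ext d (s n) (t n)); auto. apply H.
Qed.

Lemma tame_le d s t : (forall n, vnorm d (s n) <= vnorm d (t n)) -> tame d t -> tame d s.
Proof.
  intros H Ht eps He. destruct (Ht eps He) as [K [C HK]]. exists K, C. intros n Hn.
  eapply Rle_trans; [apply H| auto].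
Qed.

Lemma tame_add d s t : tame d s -> tame d t -> tame d (fun n => vadd (s n) (t n)).
Proof.
  intros Hs Ht eps He. destruct (Hs eps He) as [K1 [C1 H1]]. destruct (Ht eps He) as [K2 [C2 H2]].
  exists (max K1 K2), (C1 + C2). intros n Hn.
  eapply Rle_trans. apply (vnorm_tri d _ (s n) (t n)). intros; reflexivity.
  specialize (H1 n ltac:(lia)); specialize (H2 n ltac:(lia)). lra.
Qed.

Lemma tame_scale d a s : tame d s -> tame d (fun n => vscale a (s n)).
Proof.
  intros Hs eps He. destruct (Hs eps He) as [K [C H1]].
  exists K, (Rabs a * C). intros n Hn. rewrite vnorm_scale. rewrite Rmult_assoc.
  apply Rmult_le_compat_l. apply Rabs_pos. auto.
Qed.

Lemma tame_zero d : tame d (fun _ => vzero).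
Proof. intros eps He. exists 0%nat, 0. intros. rewrite vnorm_vzero. lra. Qed.

Lemma inN_build d (e : zseq) : tame d (fun n => e (Z.of_nat n)) ->
  tame d (fun n => e (- Z.of_nat (S n))%Z) -> inN d e.
Proof.
  intros H1 H2 eps He. destruct (tame_exp _ _ H1 eps He) as [K1 HK1].
  destruct (tame_exp _ _ H2 eps He) as [K2 HK2].
  exists (max K1 (S K2)). intros k Hk. destruct (Z_lt_le_dec k 0).
  - assert (exists n, k = (- Z.of_nat (S n))%Z) as [n ->] by (exists (Z.to_nat (-k) - 1)%nat; lia).
    eapply Rle_trans; [apply HK2; lia|]. apply exp_le_mono.
    replace (Z.abs (- Z.of_nat (S n))) with (Z.of_nat (S n)) by lia.
    rewrite <- INR_IZR_INZ. rewrite S_INR. lra.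
  - assert (exists n, k = Z.of_nat n) as [n ->] by (exists (Z.to_nat k); lia).
    replace (Z.abs (Z.of_nat n)) with (Z.of_nat n) by lia. rewrite <- INR_IZR_INZ.
    apply HK1. lia.
Qed.

Lemma inN_fwd d (e : zseq) : inN d e -> tame d (fun n => e (Z.of_nat n)).
Proof.
  intros H eps He. destruct (H eps He) as [K HK]. exists K, 1. intros n Hn.
  rewrite Rmult_1_l. rewrite INR_IZR_INZ. replace (Z.of_nat n) with (Z.abs (Z.of_nat n)) at 2 by lia.
  apply HK. lia.
Qed.

Lemma inN_bwd d (e : zseq) : inN d e -> tame d (fun n => e (- Z.of_nat (S n))%Z).
Proof.
  intros H eps He. destruct (H eps He) as [K HK]. exists K, (exp eps). intros n Hn.
  rewrite <- exp_plus. replace (eps + eps * INR n) with (eps * IZR (Z.abs (- Z.of_nat (S n)))).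
  apply HK; lia.
  replace (Z.abs (- Z.of_nat (S n))) with (Z.of_nat (S n)) by lia.
  rewrite <- INR_IZR_INZ, S_INR. ring.
Qed.

Lemma not_growth_tame d s : ~ pos_upper_exponent d s -> tame d s.
Proof.
  intros H eps He.
  destruct (classic (exists K, forall k, (K <= k)%nat -> (0 < k)%nat -> vnorm d (s k) <= exp (eps * INR k))) as [[K HK]|Hno].
  - exists (max K 1), 1. intros n Hn. rewrite Rmult_1_l. apply HK; lia.
  - exfalso. apply H. exists eps. split; auto. intros K. apply NNPP. intro Hk. apply Hno.
    exists K. intros k Hk1 Hk2. apply Rnot_lt_le. intro Hc. apply Hk. exists k. auto.
Qed.

Lemma tame_shift d s : tame d s -> tame d (fun n => s (S n)).
Proof.
  intros H eps He. destruct (H eps He) as [K [C HK]]. exists K, (C * exp eps). intros n Hn.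
  eapply Rle_trans; [apply HK; lia|]. rewrite S_INR. right.
  rewrite Rmult_assoc, <- exp_plus. f_equal. f_equal. ring.
Qed.

Lemma deriv_cont d H z L : has_deriv d H z L -> exists delta, delta > 0 /\ forall h,
  vnorm d h < delta -> vnorm d (vsub (H (vadd z h)) (H z)) <= (Cm d L + 1) * vnorm d h.
Proof.
  intros HD. destruct (HD 1 ltac:(lra)) as [delta [Hd Hh]]. exists delta; split; auto.
  intros h Hlt. eapply Rle_trans.
  apply (vnorm_tri d _ (vsub (vsub (H (vadd z h)) (H z)) (mapp d L h)) (mapp d L h)).
  intros; unfold vsub; ring.
  specialize (Hh h Hlt). pose proof (mapp_bound d L h). lra.
Qed.

Lemma vadd_app a b k : vadd a b k = a k + b k.
Proof. reflexivity. Qed.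

Lemma IZR_small z : Rabs (IZR z) < 1 -> z = 0%Z.
Proof.
  intros H. apply Rabs_def2 in H. destruct H as [H1 H2].
  assert (H3 : IZR (-1) < IZR z) by (change (IZR (-1)) with (- IZR 1); lra).
  apply lt_IZR in H3. apply lt_IZR in H1. lia.
Qed.

Lemma chain_id d F G DF DG :
  (forall z, has_deriv d F z (DF z)) -> (forall z, has_deriv d G z (DG z)) ->
  (forall z, congZ d (F (G z)) z) ->
  forall y w i, (i < d)%nat -> mapp d (DF (G y)) (mapp d (DG y) w) i = w i.
Proof.
  intros HF HG HC y.
  set (M := fun w => mapp d (DF (G y)) (mapp d (DG y) w)).
  set (CF := Cm d (DF (G y))). set (CG := Cm d (DG y)).
  assert (HCF : 0 <= CF) by apply Cm_nonneg. assert (HCG : 0 <= CG) by apply Cm_nonneg.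
  assert (StepA : forall eta, eta > 0 -> exists delta, delta > 0 /\ forall h,
     vnorm d h < delta -> vnorm d (vsub h (M h)) <= eta * vnorm d h).
  { intros eta Heta.
    set (e1 := eta / (2 * (CG + 1))). set (e2 := eta / (2 * (CF + 1))).
    assert (He1 : e1 > 0) by (unfold e1; apply Rdiv_lt_0_compat; lra).
    assert (He2 : e2 > 0) by (unfold e2; apply Rdiv_lt_0_compat; lra).
    destruct (HF (G y) e1 He1) as [dF [HdF HdFh]].
    destruct (HG y e2 He2) as [dG [HdG HdGh]].
    destruct (deriv_cont d F (G y) (DF (G y)) (HF (G y))) as [d1 [Hd1 Hd1h]].
    destruct (deriv_cont d G y (DG y) (HG y)) as [d2 [Hd2 Hd2h]].
    destruct (HC y) as [m0 Hm0].
    set (rho := Rmin dF (Rmin d1 (/ (2 * (CF + 1))))).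
    assert (Hrho : rho > 0).
    { unfold rho. repeat apply Rmin_pos; try lra. apply Rinv_0_lt_compat; lra. }
    exists (Rmin (Rmin dG d2) (Rmin (/2) (rho / (CG + 1)))). split.
    { repeat apply Rmin_pos; try lra. apply Rdiv_lt_0_compat; lra. }
    intros h Hh.
    assert (HhG : vnorm d h < dG) by (eapply Rlt_le_trans; [exact Hh|]; eapply Rle_trans; apply Rmin_l).
    assert (Hh2 : vnorm d h < d2) by (eapply Rlt_le_trans; [exact Hh|]; eapply Rle_trans; [apply Rmin_l|apply Rmin_r]).
    assert (Hhhalf : vnorm d h < /2) by (eapply Rlt_le_trans; [exact Hh|]; eapply Rle_trans; [apply Rmin_r|apply Rmin_l]).
    assert (Hhrho : vnorm d h < rho / (CG + 1)) by (eapply Rlt_le_trans; [exact Hh|]; eapply Rle_trans; apply Rmin_r).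
    set (g := vsub (G (vadd y h)) (G y)).
    assert (Hg : vnorm d g <= (CG + 1) * vnorm d h) by (apply Hd2h; auto).
    assert (Hgrho : vnorm d g < rho).
    { apply Rle_lt_trans with ((CG + 1) * vnorm d h); auto.
      apply Rmult_lt_compat_l with (r := CG + 1) in Hhrho; [|lra].
      replace ((CG + 1) * (rho / (CG + 1))) with rho in Hhrho by (field; lra). lra. }
    assert (HgF : vnorm d g < dF) by (eapply Rlt_le_trans; [exact Hgrho|]; apply Rmin_l).
    assert (Hg1 : vnorm d g < d1) by (eapply Rlt_le_trans; [exact Hgrho|]; unfold rho; eapply Rle_trans; [apply Rmin_r|apply Rmin_l]).
    assert (Hgs : vnorm d g < / (2 * (CF + 1))) by (eapply Rlt_le_trans; [exact Hgrho|]; unfold rho; eapply Rle_trans; apply Rmin_r).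
    assert (E : vadd (G y) g = G (vadd y h)).
    { apply functional_extensionality; intro j. unfold g, vsub. unfold vadd at 1. ring. }
    assert (Hfd := Hd1h g Hg1). rewrite E in Hfd. fold CF in Hfd.
    assert (Hfds : vnorm d (vsub (F (G (vadd y h))) (F (G y))) < /2).
    { eapply Rle_lt_trans; [exact Hfd|].
      apply Rmult_lt_compat_l with (r := CF + 1) in Hgs; [|lra].
      replace ((CF + 1) * / (2 * (CF + 1))) with (/2) in Hgs by (field; lra). lra. }
    assert (Hint : forall j, (j < d)%nat -> F (G (vadd y h)) j - F (G y) j = h j).
    { intros j Hj. destruct (HC (vadd y h)) as [m1 Hm1].
      rewrite Hm1, Hm0 by auto. unfold vadd.
      assert (Hz : (m1 j - m0 j)%Z = 0%Z).
      { apply IZR_small. rewrite minus_IZR.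
        pose proof (coord_le d (vsub (F (G (vadd y h))) (F (G y))) j Hj) as C0. pose proof (coord_le d h j Hj) as C2.
        assert (C1 : Rabs (F (G (vadd y h)) j - F (G y) j) < /2) by (unfold vsub at 1 in C0; lra).
        rewrite Hm1, Hm0 in C1 by auto. unfold vadd in C1.
        replace (IZR (m1 j) - IZR (m0 j)) with ((y j + h j + IZR (m1 j) - (y j + IZR (m0 j))) + - h j) by ring.
        eapply Rle_lt_trans; [apply Rabs_triang|]. rewrite Rabs_Ropp. lra. }
      assert (IZR (m1 j) = IZR (m0 j)) by (f_equal; lia). rewrite H. ring. }
    set (r := vsub (vsub (G (vadd y h)) (G y)) (mapp d (DG y) h)).
    assert (Hr : vnorm d r <= e2 * vnorm d h) by (apply HdGh; auto).
    assert (HFr := HdFh g HgF). rewrite E in HFr.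
    eapply Rle_trans.
    apply (vnorm_tri d _ (vsub (vsub (F (G (vadd y h))) (F (G y))) (mapp d (DF (G y)) g))
                          (mapp d (DF (G y)) r)).
    { intros j Hj. unfold M. unfold vsub at 1.
      assert (Hgr : mapp d (DF (G y)) g j = mapp d (DF (G y)) (mapp d (DG y) h) j + mapp d (DF (G y)) r j).
      { rewrite <- mapp_add. apply mapp_ext. intros k Hk. rewrite vadd_app. unfold r, g, vsub. ring. }
      unfold vsub at 1. rewrite Hgr. rewrite <- (Hint j Hj). unfold vsub. ring. }
    pose proof (mapp_bound d (DF (G y)) r) as Hb. fold CF in Hb.
    assert (T1 : e1 * vnorm d g <= eta / 2 * vnorm d h).
    { apply Rle_trans with (e1 * ((CG + 1) * vnorm d h)). apply Rmult_le_compat_l; lra.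
      unfold e1. right. field. lra. }
    assert (T2 : CF * vnorm d r <= eta / 2 * vnorm d h).
    { apply Rle_trans with (CF * (e2 * vnorm d h)). apply Rmult_le_compat_l; lra.
      unfold e2. pose proof (vnorm_nonneg d h).
      apply Rle_trans with (CF / (CF + 1) * (eta / 2) * vnorm d h). right; field; lra.
      apply Rmult_le_compat_r; auto.
      assert (CF / (CF + 1) <= 1). { apply Rmult_le_reg_r with (CF + 1). lra. unfold Rdiv. rewrite Rmult_assoc, Rinv_l; lra. }
      nra. }
    lra. }
  intros w i Hi.
  assert (StepB : forall eta, eta > 0 -> vnorm d (vsub w (M w)) <= eta * vnorm d w).
  { intros eta Heta. destruct (StepA eta Heta) as [delta [Hdelta Hd]].
    pose proof (vnorm_nonneg d w) as Hw0.
    set (t := delta / (2 * (vnorm d w + 1))).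
    assert (Ht : t > 0) by (unfold t; apply Rdiv_lt_0_compat; lra).
    assert (Hsc : vnorm d (vscale t w) = t * vnorm d w) by (rewrite vnorm_scale, Rabs_right; lra).
    assert (Hlt : vnorm d (vscale t w) < delta).
    { rewrite Hsc. unfold t.
      apply Rle_lt_trans with (delta / 2). 
      apply Rle_trans with (delta / 2 * (vnorm d w / (vnorm d w + 1))). right; field; lra.
      assert (vnorm d w / (vnorm d w + 1) <= 1).
      { apply Rmult_le_reg_r with (vnorm d w + 1). lra. unfold Rdiv. rewrite Rmult_assoc, Rinv_l; lra. }
      nra. lra. }
    specialize (Hd _ Hlt).
    assert (Heq : vnorm d (vsub (vscale t w) (M (vscale t w))) = t * vnorm d (vsub w (M w))).
    { rewrite (vnorm_ext d _ (vscale t (vsub w (M w)))).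
      rewrite vnorm_scale, Rabs_right by lra. reflexivity.
      intros j Hj. unfold vsub, M; cbv beta.
      rewrite (mapp_ext d (DF (G y)) (mapp d (DG y) (vscale t w)) (vscale t (mapp d (DG y) w)) j).
      rewrite mapp_scale. unfold vscale. ring. intros k Hk; apply mapp_scale. }
    rewrite Heq, Hsc in Hd. apply Rmult_le_reg_l with t; auto. lra. }
  assert (Hz : vnorm d (vsub w (M w)) <= 0).
  { apply Rnot_lt_le. intro Ha. set (a := vnorm d (vsub w (M w))) in *.
    pose proof (vnorm_nonneg d w). set (b := vnorm d w) in *.
    specialize (StepB (a / (2 * (b + 1))) ltac:(apply Rdiv_lt_0_compat; lra)).
    fold b in StepB.
    assert (a * (2 * (b + 1)) <= a * b).
    { apply Rle_trans with (a / (2 * (b + 1)) * b * (2 * (b + 1))).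
      apply Rmult_le_compat_r; lra. right; field; lra. }
    nra. }
  pose proof (vnorm_zero0 d _ Hz i Hi). unfold vsub, M in H. lra.
Qed.

Lemma Dfk_ext d F G DF x n u v : veq d u v -> veq d (Dfk d F G DF x n u) (Dfk d F G DF x n v).
Proof. destruct n; simpl; auto. intros H i Hi. apply mapp_ext. clear i Hi.
  induction n; simpl; auto. intros i Hi; apply mapp_ext; auto. Qed.

Lemma Dfk_add d F G DF x n u v i : Dfk d F G DF x n (vadd u v) i = Dfk d F G DF x n u i + Dfk d F G DF x n v i.
Proof.
  revert i. induction n; intros i; simpl. reflexivity.
  rewrite <- mapp_add. apply mapp_ext. intros j Hj. rewrite IHn. reflexivity.
Qed.

Lemma Dfk_scale d F G DF x n a u i : Dfk d F G DF x n (vscale a u) i = a * Dfk d F G DF x n u i.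
Proof.
  revert i. induction n; intros i; simpl. reflexivity.
  rewrite <- mapp_scale. apply mapp_ext. intros j Hj. rewrite IHn. reflexivity.
Qed.

Lemma orb_neg_S F G x m : orb F G x (- Z.of_nat (S m))%Z = G (orb F G x (- Z.of_nat m))%Z.
Proof.
  destruct m. reflexivity.
  change (- Z.of_nat (S (S m)))%Z with (Zneg (Pos.of_succ_nat (S m))).
  change (- Z.of_nat (S m))%Z with (Zneg (Pos.of_succ_nat m)).
  unfold orb. rewrite !SuccNat2Pos.id_succ. reflexivity.
Qed.

Section Main.
Variables (d : nat) (F G : vec -> vec) (DF DG : vec -> mat) (x : vec).
Let A k := DF (orb F G x k).

Lemma kernel_zero : Gamma_bijection_N d F G DF x -> forall fwd bwd : nat -> vec,
  tame d fwd -> tame d bwd ->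
  (forall m, veq d (fwd (S m)) (mapp d (A (Z.of_nat m)) (fwd m))) ->
  veq d (fwd 0%nat) (mapp d (A (-1)%Z) (bwd 0%nat)) ->
  (forall n, veq d (bwd n) (mapp d (A (- Z.of_nat (S (S n)))%Z) (bwd (S n)))) ->
  veq d (fwd 0%nat) vzero.
Proof.
  intros [_ [_ Hinj]] fwd bwd Hf Hb Hrf H0 Hrb.
  set (e1 := fun k : Z => if (0 <=? k)%Z then fwd (Z.to_nat k) else bwd (Z.to_nat (- k) - 1)%nat).
  assert (e1p : forall m, e1 (Z.of_nat m) = fwd m).
  { intros m. unfold e1. rewrite (proj2 (Z.leb_le _ _)) by lia. rewrite Nat2Z.id. auto. }
  assert (e1n : forall n, e1 (- Z.of_nat (S n))%Z = bwd n).
  { intros n. unfold e1. rewrite (proj2 (Z.leb_gt _ _)) by lia. f_equal. lia. }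
  set (e0 := fun _ : Z => vzero).
  assert (I1 : inN d e1).
  { apply inN_build. eapply tame_eqv; [|exact Hf]. intros n i Hi; rewrite e1p; auto.
    eapply tame_eqv; [|exact Hb]. intros n i Hi; rewrite e1n; auto. }
  assert (I0 : inN d e0).
  { apply inN_build; apply tame_zero. }
  assert (HG : zseq_eq d (Gamma d F G DF x e1) (Gamma d F G DF x e0)).
  { intros k i Hi. unfold Gamma, e0, vsub. rewrite mapp_zero. unfold vzero.
    destruct (Z_lt_le_dec k 0).
    - assert (exists n, k = (- Z.of_nat (S n))%Z) as [n ->] by (exists (Z.to_nat (-k) - 1)%nat; lia).
      replace (- Z.of_nat (S n) - 1)%Z with (- Z.of_nat (S (S n)))%Z by lia.
      rewrite !e1n. rewrite (Hrb n i Hi). unfold A. ring.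
    - assert (exists m, k = Z.of_nat m) as [m ->] by (exists (Z.to_nat k); lia).
      destruct m.
      + replace (Z.of_nat 0 - 1)%Z with (- Z.of_nat 1)%Z by lia.
        rewrite e1n, e1p. rewrite (H0 i Hi). unfold A. simpl. ring.
      + replace (Z.of_nat (S m) - 1)%Z with (Z.of_nat m) by lia.
        rewrite !e1p. rewrite (Hrf m i Hi). unfold A. ring. }
  specialize (Hinj e1 e0 I1 I0 HG (Z.of_nat 0)). rewrite e1p in Hinj. exact Hinj.
Qed.

End Main.

Theorem lemma3p5 (d : nat) (F G : vec -> vec) (DF DG : vec -> mat) (x : vec) :
  C1_diffeo_torus d F G DF DG ->
  Gamma_bijection_N d F G DF x ->
  u_hyperbolic d F G DF DG x.
Proof.
  intros [HtF [HtG [[HdF _] [[HdG _] [HGF HFG]]]]] Hbij.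
  pose proof (chain_id d F G DF DG HdF HdG HFG) as CR.
  set (Sset := fun v => tame d (fun n => Dfk d F G DF x n v)).
  set (Uset := fun v => exists xi : nat -> vec, tame d xi /\
      veq d v (mapp d (DF (orb F G x (-1)%Z)) (xi 0%nat)) /\
      forall n, veq d (xi n) (mapp d (DF (orb F G x (- Z.of_nat (S (S n)))%Z)) (xi (S n)))).
  exists Uset, Sset. split; [|split; [|split; [|split]]].
  -
    split; [|split; [|split]].
    + exists (fun _ => vzero). split; [apply tame_zero|split].
      * intros i Hi. rewrite mapp_zero. reflexivity.
      * intros n i Hi. rewrite mapp_zero. reflexivity.
    + intros u v [x1 [T1 [A1 B1]]] [x2 [T2 [A2 B2]]].
      exists (fun n => vadd (x1 n) (x2 n)). split; [apply tame_add; auto|split].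
      * intros i Hi. rewrite mapp_add. unfold vadd at 1. rewrite A1, A2 by auto. reflexivity.
      * intros n i Hi. rewrite mapp_add. unfold vadd at 1. rewrite B1, B2 by auto. reflexivity.
    + intros a u [x1 [T1 [A1 B1]]].
      exists (fun n => vscale a (x1 n)). split; [apply tame_scale; auto|split].
      * intros i Hi. rewrite mapp_scale. unfold vscale at 1. rewrite A1 by auto. reflexivity.
      * intros n i Hi. rewrite mapp_scale. unfold vscale at 1. rewrite B1 by auto. reflexivity.
    + intros u v Huv [x1 [T1 [A1 B1]]]. exists x1. split; auto. split; auto.
      intros i Hi. rewrite <- Huv by auto. apply A1; auto.
  -
    split; [|split; [|split]].
    + unfold Sset. eapply tame_eqv; [|apply tame_zero]. intros n i Hi.
      rewrite (Dfk_ext d F G DF x n vzero (vscale 0 vzero)); auto.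
      rewrite Dfk_scale. unfold vzero; ring.
      intros j Hj; unfold vzero, vscale; ring.
    + intros u v Hu Hv. unfold Sset. eapply tame_eqv; [|apply (tame_add d _ _ Hu Hv)].
      intros n i Hi. rewrite Dfk_add. reflexivity.
    + intros a u Hu. unfold Sset. eapply tame_eqv; [|apply (tame_scale d a _ Hu)].
      intros n i Hi. rewrite Dfk_scale. reflexivity.
    + intros u v Huv Hu. unfold Sset. eapply tame_eqv; [|exact Hu].
      intros n. apply Dfk_ext. intros i Hi; symmetry; auto.
  -
    intros v.
    set (zeta := fun k : Z => if Z.eqb k 0 then v else vzero).
    assert (Hz : inN d zeta).
    { intros eps He. exists 1%nat. intros k Hk. unfold zeta.
      rewrite (proj2 (Z.eqb_neq k 0)) by lia. rewrite vnorm_vzero. left; apply exp_pos. }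
    destruct (proj1 (proj2 Hbij) zeta Hz) as [eta [HetaN Heq]].
    assert (Hfwd : forall n, veq d (eta (Z.of_nat n)) (Dfk d F G DF x n (eta 0%Z))).
    { induction n; intros i Hi. reflexivity.
      specialize (Heq (Z.of_nat (S n)) i Hi). unfold Gamma, vsub, zeta in Heq.
      rewrite (proj2 (Z.eqb_neq _ 0)) in Heq by lia. unfold vzero in Heq.
      replace (Z.of_nat (S n) - 1)%Z with (Z.of_nat n) in Heq by lia.
      change (Dfk d F G DF x (S n) (eta 0%Z) i) with
        (mapp d (DF (orb F G x (Z.of_nat n))) (Dfk d F G DF x n (eta 0%Z)) i).
      rewrite <- (mapp_ext _ _ _ _ _ IHn). lra. }
    exists (vscale (-1) (mapp d (DF (orb F G x (-1)%Z)) (eta (-1)%Z))), (eta 0%Z).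
    split; [|split].
    + exists (fun n => vscale (-1) (eta (- Z.of_nat (S n))%Z)). split; [|split].
      * apply tame_scale. apply inN_bwd; auto.
      * intros i Hi. rewrite mapp_scale. reflexivity.
      * intros n i Hi. rewrite mapp_scale. unfold vscale.
        specialize (Heq (- Z.of_nat (S n))%Z i Hi). unfold Gamma, vsub, zeta in Heq.
        rewrite (proj2 (Z.eqb_neq _ 0)) in Heq by lia. unfold vzero in Heq.
        replace (- Z.of_nat (S n) - 1)%Z with (- Z.of_nat (S (S n)))%Z in Heq by lia. lra.
    + unfold Sset. eapply tame_eqv; [|apply (inN_fwd d eta HetaN)].
      intros n i Hi. symmetry. apply Hfwd; auto.
    + intros i Hi. specialize (Heq 0%Z i Hi). unfold Gamma, vsub, zeta in Heq.
      rewrite Z.eqb_refl in Heq. change (0 - 1)%Z with (-1)%Z in Heq.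
      unfold vadd, vscale. lra.
  -
    intros s Hs Hnz. apply NNPP. intro Hn. apply not_growth_tame in Hn.
    assert (H0 : veq d (Dfk d F G DF x 0 s) vzero).
    { apply (kernel_zero d F G DF x Hbij (fun n => Dfk d F G DF x n s)
               (fun n => Dfmk d F G DG x (S n) s)); auto.
      - apply (tame_shift d (fun n => Dfmk d F G DG x n s)); auto.
      - intros m i Hi. reflexivity.
      - intros i Hi.
        change (s i = mapp d (DF (orb F G x (- Z.of_nat 1)%Z))
                 (mapp d (DG (orb F G x (- Z.of_nat 0)%Z)) (Dfmk d F G DG x 0 s)) i).
        rewrite orb_neg_S. rewrite CR; auto.
      - intros n i Hi.
        change (Dfmk d F G DG x (S (S n)) s) with
          (mapp d (DG (orb F G x (- Z.of_nat (S n))%Z)) (Dfmk d F G DG x (S n) s)).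
        rewrite orb_neg_S. rewrite CR; auto. }
    destruct Hnz as [i [Hi Hne]]. apply Hne. apply H0; auto.
  -
    intros u [xi [Txi [A1 B1]]] Hnz. apply NNPP. intro Hn. apply not_growth_tame in Hn.
    assert (H0 : veq d (Dfk d F G DF x 0 u) vzero).
    { apply (kernel_zero d F G DF x Hbij (fun n => Dfk d F G DF x n u) xi); auto.
      intros m i Hi. reflexivity. }
    destruct Hnz as [i [Hi Hne]]. apply Hne. apply H0; auto.
Qed.
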